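(* Let $\mathsf{K}$ be one of $\mathsf{PSL}$, $\mathsf{ISL}$, $\mathsf{bISL}$, $\mathsf{PDL}$, $\mathsf{IL}$, $\mathsf{HA}$, and let $\mathsf{K}^\partial$ be the associated class of partial maps between posets (defined in the context). For every $\boldsymbol{A},\boldsymbol{B}\in\mathsf{K}$ and all posets $\mathbb{X},\mathbb{Y}$: (i) if $f\colon \boldsymbol{A}\to\boldsymbol{B}$ is a homomorphism, then $f_\ast\colon \boldsymbol{B}_\ast \rightharpoonup \boldsymbol{A}_\ast$ belongs to $\mathsf{K}^\partial$; (ii) if $p\colon\mathbb{X}\rightharpoonup\mathbb{Y}$ belongs to $\mathsf{K}^\partial$, then $\mathsf{Up}_{\mathsf{K}}(p)\colon \mathsf{Up}_{\mathsf{K}}(\mathbb{Y})\to\mathsf{Up}_{\mathsf{K}}(\mathbb{X})$ is a homomorphism. Furthermore, if $f$ is injective then $f_\ast$ is surjective, and if $p$ is surjective then $\mathsf{Up}_{\mathsf{K}}(p)$ is injective.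
   Context: Varieties: $\mathsf{PSL}$ = algebras $\langle A;\land,\lnot,0,1\rangle$ with $\langle A;\land\rangle$ a semilattice (order $a\le b$ iff $a\land b=a$) with minimum $0$, maximum $1$, and $c\land a=0\iff c\le\lnot a$; $\mathsf{ISL}$ = algebras $\langle A;\land,\to,1\rangle$, semilattice with maximum $1$ and $c\land a\le b\iff c\le a\to b$; $\mathsf{bISL}$ = $\langle A;\land,\to,0,1\rangle$ with $\langle A;\land,\to,1\rangle\in\mathsf{ISL}$ and $0$ the minimum; $\mathsf{PDL}$ = $\langle A;\land,\lor,\lnot,0,1\rangle$, distributive lattices whose $\langle\land,\lnot,0,1\rangle$-reduct is in $\mathsf{PSL}$; $\mathsf{IL}$ = $\langle A;\land,\lor,\to,1\rangle$, lattices whose $\langle\land,\to,1\rangle$-reduct is in $\mathsf{ISL}$; $\mathsf{HA}$ = Heyting algebras $\langle A;\land,\lor,\to,0,1\rangle$. For an algebra $\boldsymbol{A}$ in one of these, a filter is a nonempty upset of $\langle A;\le\rangle$ closed under $\land$; it is meet irreducible if it is proper and not the intersection of two filters both different from it; $\boldsymbol{A}_\ast$ is the poset of meet irreducible filters ordered by inclusion. A partial function $p\colon X\rightharpoonup Y$ is a function from a subset $\mathsf{dom}(p)\subseteq X$ to $Y$; it is surjective if its range is $Y$; between posets it is order preserving if $x\le z$ in $\mathsf{dom}(p)$ implies $p(x)\le p(z)$. For posets, ${\uparrow}S,{\downarrow}S$ denote the up/down-closures. An order preserving $p\colon\mathbb{X}\rightharpoonup\mathbb{Y}$ is: a partial negative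 p-morphism if $X={\downarrow}\{x\in X: {\uparrow}x\subseteq\mathsf{dom}(p)\}$ and for all $x\in\mathsf{dom}(p)$, $y\in Y$ with $p(x)\le y$ there is $z\in\mathsf{dom}(p)$ with $x\le z$ and $y\le p(z)$; a partial positive p-morphism if for all $x\in\mathsf{dom}(p)$, $y\in Y$ with $p(x)\le y$ there is $z\in\mathsf{dom}(p)$ with $x\le z$ and $y=p(z)$; a partial p-morphism if both. Dropping ''partial'' means $p$ is total. $p$ is almost total if $\mathsf{dom}(p)$ is a downset. The classes $\mathsf{K}^\partial$ are: $\mathsf{PSL}^\partial$: partial negative p-morphisms; $\mathsf{ISL}^\partial$: partial positive p-morphisms; $\mathsf{bISL}^\partial$: partial p-morphisms; $\mathsf{PDL}^\partial$: (total) negative p-morphisms; $\mathsf{IL}^\partial$: almost total partial positive p-morphisms; $\mathsf{HA}^\partial$: (total) p-morphisms. For a homomorphism $f\colon\boldsymbol{A}\to\boldsymbol{B}$, $f_\ast\colon\boldsymbol{B}_\ast\rightharpoonup\boldsymbol{A}_\ast$ has domain $\{F\in\boldsymbol{B}_\ast: f^{-1}[F]\in\boldsymbol{A}_\ast\}$ and $f_\ast(F)=f^{-1}[F]$. For a poset $\mathbb{X}$, $\mathsf{Up}_{\mathsf{K}}(\mathbb{X})$ is the reduct to the language of $\mathsf{K}$ of the Heyting algebra $\langle\mathsf{Up}(\mathbb{X});\cap,\cup,\to,\emptyset,X\rangle$ of upsets, where $U\to V = X\smallsetminus{\downarrow}(U\smallsetminus V)$. For $p\colon\mathbb{X}\rightharpoonup\mathbb{Y}$,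 $\mathsf{Up}_{\mathsf{K}}(p)(U) = X\smallsetminus{\downarrow}p^{-1}[Y\smallsetminus U]$. *)

(* Defs.v *)
From Stdlib Require Import ProofIrrelevance FunctionalExtensionality PropExtensionality.

Set Implicit Arguments.

Inductive kind := PSL | ISL | bISL | PDL | IL | HA.

(** For a variety K, only the operations of the language of K are relevant:
    axioms ([in_K]) and homomorphisms ([hom]) only mention those, so the other
    operations are inert (every K-algebra extends to such a record with
    arbitrary dummy values). *)
Record alg := Alg {
  car :> Type;
  meet : car -> car -> car;
  join : car -> car -> car;
  imp  : car -> car -> car;
  neg  : car -> car;
  bot  : car;
  top  : car }.

Section AlgDefs.
Variable A : alg.

Definition ale (a b : A) : Prop := meet A a b = a.

Definition semilattice : Prop :=
  (forall a b c : A, meet A a (meet A b c) = meet A (meet A a b) c) /\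
  (forall a b : A, meet A a b = meet A b a) /\
  (forall a : A, meet A a a = a).

Definition lattice : Prop :=
  semilattice /\
  (forall a b c : A, join A a (join A b c) = join A (join A a b) c) /\
  (forall a b : A, join A a b = join A b a) /\
  (forall a : A, join A a a = a) /\
  (forall a b : A, meet A a (join A a b) = a) /\
  (forall a b : A, join A a (meet A a b) = a).

Definition distributive : Prop :=
  forall a b c : A, meet A a (join A b c) = join A (meet A a b) (meet A a c).

Definition bot_min : Prop := forall a : A, ale (bot A) a.
Definition top_max : Prop := forall a : A, ale a (top A).

Definition is_PSL : Prop :=
  semilattice /\ bot_min /\ top_max /\
  (forall a c : A, meet A c a = bot A <-> ale c (neg A a)).

Definition is_ISL : Prop :=
  semilattice /\ top_max /\
  (forall a b c : A, ale (meet A c a) b <-> ale c (imp A a b)).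

Definition is_bISL : Prop := is_ISL /\ bot_min.
Definition is_PDL : Prop := lattice /\ distributive /\ is_PSL.
Definition is_IL : Prop := lattice /\ is_ISL.
Definition is_HA : Prop := lattice /\ is_bISL.

Definition filter (F : A -> Prop) : Prop :=
  (exists a, F a) /\
  (forall a b, F a -> ale a b -> F b) /\
  (forall a b, F a -> F b -> F (meet A a b)).

Definition mi_filter (F : A -> Prop) : Prop :=
  filter F /\ (exists a, ~ F a) /\
  ~ (exists G H : A -> Prop, filter G /\ filter H /\
       ~ (forall a, G a <-> F a) /\ ~ (forall a, H a <-> F a) /\
       (forall a, F a <-> (G a /\ H a))).
End AlgDefs.
Arguments ale {A} a b.
Arguments filter {A} F.
Arguments mi_filter {A} F.

Definition in_K (k : kind) (A : alg) : Prop :=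
  match k with
  | PSL => is_PSL A | ISL => is_ISL A | bISL => is_bISL A
  | PDL => is_PDL A | IL => is_IL A | HA => is_HA A
  end.

Definition hom (k : kind) (A B : alg) (f : A -> B) : Prop :=
  let pm := forall a b, f (meet A a b) = meet B (f a) (f b) in
  let pj := forall a b, f (join A a b) = join B (f a) (f b) in
  let pi := forall a b, f (imp A a b) = imp B (f a) (f b) in
  let pn := forall a, f (neg A a) = neg B (f a) in
  let p0 := f (bot A) = bot B in
  let p1 := f (top A) = top B in
  match k with
  | PSL => pm /\ pn /\ p0 /\ p1
  | ISL => pm /\ pi /\ p1
  | bISL => pm /\ pi /\ p0 /\ p1
  | PDL => pm /\ pj /\ pn /\ p0 /\ p1
  | IL => pm /\ pj /\ pi /\ p1
  | HA => pm /\ pj /\ pi /\ p0 /\ p1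
  end.

Record poset := Poset {
  pcar :> Type;
  ple : pcar -> pcar -> Prop;
  ple_refl : forall x, ple x x;
  ple_trans : forall x y z, ple x y -> ple y z -> ple x z;
  ple_anti : forall x y, ple x y -> ple y x -> x = y }.
Arguments ple {p} _ _.
Arguments ple_trans {p} _ _ _ _ _.

(** A partial map X ⇀ Y is represented by its graph, a single-valued relation. *)
Section PMaps.
Variables X Y : poset.
Variable p : X -> Y -> Prop.

Definition single_valued : Prop := forall x y y', p x y -> p x y' -> y = y'.
Definition dom (x : X) : Prop := exists y, p x y.
Definition order_pres : Prop :=
  forall x z a b, p x a -> p z b -> ple x z -> ple a b.
Definition total : Prop := forall x, dom x.
Definition almost_total : Prop := forall x z, ple x z -> dom z -> dom x.
Definition psurjective : Prop := forall y, exists x, p x y.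

Definition neg_cond : Prop :=
  (forall x, exists w, ple x w /\ forall v, ple w v -> dom v) /\
  (forall x a y, p x a -> ple a y -> exists z b, ple x z /\ p z b /\ ple y b).

Definition pos_cond : Prop :=
  forall x a y, p x a -> ple a y -> exists z, ple x z /\ p z y.
End PMaps.
Arguments single_valued {X Y} p.
Arguments dom {X Y} p x.
Arguments order_pres {X Y} p.
Arguments total {X Y} p.
Arguments almost_total {X Y} p.
Arguments psurjective {X Y} p.
Arguments neg_cond {X Y} p.
Arguments pos_cond {X Y} p.

Definition in_Kd (k : kind) {X Y : poset} (p : X -> Y -> Prop) : Prop :=
  single_valued p /\ order_pres p /\
  match k with
  | PSL => neg_cond p
  | ISL => pos_cond p
  | bISL => neg_cond p /\ pos_cond p
  | PDL => total p /\ neg_cond p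
  | IL => almost_total p /\ pos_cond p
  | HA => total p /\ neg_cond p /\ pos_cond p
  end.

Definition mifs (A : alg) := { F : A -> Prop | mi_filter F }.
Definition mifs_le {A : alg} (F G : mifs A) : Prop :=
  forall a, proj1_sig F a -> proj1_sig G a.

Lemma mifs_le_refl (A : alg) (F : mifs A) : mifs_le F F.
Proof. intros a h; exact h. Qed.

Lemma mifs_le_trans (A : alg) (F G H : mifs A) :
  mifs_le F G -> mifs_le G H -> mifs_le F H.
Proof. intros h1 h2 a h; apply h2, h1, h. Qed.

Lemma mifs_le_anti (A : alg) (F G : mifs A) :
  mifs_le F G -> mifs_le G F -> F = G.
Proof.
  destruct F as [F hF], G as [G hG]; unfold mifs_le; simpl; intros h1 h2.
  assert (e : F = G).
  { apply functional_extensionality; intro a;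
    apply propositional_extensionality; split; auto. }
  subst G. f_equal. apply proof_irrelevance.
Qed.

Definition dual_star (A : alg) : poset :=
  @Poset (mifs A) (@mifs_le A) (@mifs_le_refl A) (@mifs_le_trans A) (@mifs_le_anti A).

(** f_* : B_* ⇀ A_*, F ↦ f^{-1}[F] (defined iff f^{-1}[F] is meet irreducible). *)
Definition fstar {A B : alg} (f : A -> B) :
  dual_star B -> dual_star A -> Prop :=
  fun F G => forall a, proj1_sig G a <-> proj1_sig F (f a).

Definition upset {X : poset} (U : X -> Prop) : Prop :=
  forall x y, ple x y -> U x -> U y.
Definition ups (X : poset) := { U : X -> Prop | upset U }.

Section Ups.
Variable X : poset.

Lemma up_meet_ok (U V : ups X) : upset (fun x => proj1_sig U x /\ proj1_sig V x).
Proof.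
  destruct U as [U hU], V as [V hV]; intros x y hxy [h1 h2]; simpl; eauto.
Qed.
Lemma up_join_ok (U V : ups X) : upset (fun x => proj1_sig U x \/ proj1_sig V x).
Proof.
  destruct U as [U hU], V as [V hV]; intros x y hxy [h|h]; simpl; eauto.
Qed.
Lemma up_compl_down_ok (S : X -> Prop) :
  upset (fun x => ~ exists x', ple x x' /\ S x').
Proof.
  intros x y hxy h [x' [h1 h2]]. apply h. exists x'. split; auto.
  eapply ple_trans; eauto.
Qed.
Lemma up_top_ok : upset (fun _ : X => True). Proof. intros ? ? ? h; exact h. Qed.
Lemma up_bot_ok : upset (fun _ : X => False). Proof. intros ? ? ? h; exact h. Qed.

Definition up_meet (U V : ups X) : ups X := exist _ _ (up_meet_ok U V).
Definition up_join (U V : ups X) : ups X := exist _ _ (up_join_ok U V).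
(** U → V = X \ ↓(U \ V) *)
Definition up_imp (U V : ups X) : ups X :=
  exist _ _ (up_compl_down_ok (fun x => proj1_sig U x /\ ~ proj1_sig V x)).
Definition up_bot : ups X := exist _ _ up_bot_ok.
Definition up_top : ups X := exist _ _ up_top_ok.
Definition up_neg (U : ups X) : ups X := up_imp U up_bot.
End Ups.

(** Up(X) as an algebra of the full signature; Up_K(X) is its K-reduct,
    which is what [hom k] and [in_K k] look at. *)
Definition Up (X : poset) : alg :=
  @Alg (ups X) (@up_meet X) (@up_join X) (@up_imp X) (@up_neg X) (up_bot X) (up_top X).

(** Up_K(p)(U) = X \ ↓ p^{-1}[Y \ U] *)
Definition Up_map {X Y : poset} (p : X -> Y -> Prop) (U : Up Y) : Up X :=
  exist _ _ (@up_compl_down_ok X (fun x => exists y, p x y /\ ~ proj1_sig U y)).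

(* Main.v *)
Require Import Defs.
From Stdlib Require Import Classical ProofIrrelevance FunctionalExtensionality PropExtensionality.
From mathcomp Require classical_sets boolp.
Set Implicit Arguments.

Lemma zorn_prop (T : Type) (R : T -> T -> Prop) :
  (forall t, R t t) -> (forall r s t, R r s -> R s t -> R r t) ->
  (forall s t, R s t -> R t s -> s = t) ->
  (forall A : T -> Prop, (forall s t, A s -> A t -> R s t \/ R t s) -> exists t, forall s, A s -> R s t) ->
  exists t, forall s, R t s -> s = t.
Proof.
intros h1 h2 h3 h4.
pose (Rb := fun a b => boolp.asbool (R a b)).
assert (E : forall a b, Rb a b = true <-> R a b).
{ intros a b. unfold Rb. split; intro H. now apply (ssrbool.elimT (boolp.asboolP _)). now apply (ssrbool.introT (boolp.asboolP _)). }
destruct (@classical_sets.Zorn T Rb) as [t Ht].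
- intros; apply E; auto.
- intros r s t a b; apply E; apply E in a; apply E in b; eauto.
- intros s t a b; apply E in a; apply E in b; auto.
- intros A HA. destruct (h4 A) as [t Ht].
  + intros s t a b. destruct (HA s t a b) as [c|c]; [left|right]; apply E; exact c.
  + exists t; intros s a; apply E; auto.
- exists t. intros s a. apply Ht. apply E. exact a.
Qed.

Lemma ale_refl (A : alg) (hS : semilattice A) (a : A) : ale a a.
Proof. destruct hS as [_ [_ hI]]. apply hI. Qed.

Lemma ale_trans (A : alg) (hS : semilattice A) (a b c : A) : ale a b -> ale b c -> ale a c.
Proof.
  destruct hS as [hA [hC hI]]; unfold ale; intros h1 h2.
  rewrite <- h1. rewrite <- hA. rewrite h2. reflexivity.
Qed.

Lemma ale_anti (A : alg) (hS : semilattice A) (a b : A) : ale a b -> ale b a -> a = b.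
Proof.
  destruct hS as [hA [hC hI]]; unfold ale; intros h1 h2.
  rewrite <- h1. rewrite hC. exact h2.
Qed.

Lemma meet_lb1 (A : alg) (hS : semilattice A) (a b : A) : ale (meet A a b) a.
Proof.
  destruct hS as [hA [hC hI]]; unfold ale.
  rewrite (hC (meet A a b) a). rewrite hA. rewrite hI. reflexivity.
Qed.

Lemma meet_lb2 (A : alg) (hS : semilattice A) (a b : A) : ale (meet A a b) b.
Proof.
  destruct hS as [hA [hC hI]]; unfold ale.
  rewrite <- hA. rewrite hI. reflexivity.
Qed.

Lemma meet_glb (A : alg) (hS : semilattice A) (a b c : A) : ale c a -> ale c b -> ale c (meet A a b).
Proof.
  destruct hS as [hA [hC hI]]; unfold ale; intros h1 h2.
  rewrite hA. rewrite h1. exact h2.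
Qed.

Lemma lb1 (A : alg) (hS : semilattice A) (a b c : A) : ale a c -> ale (meet A a b) c.
Proof. intro h. eapply (ale_trans hS); [apply (meet_lb1 hS)|exact h]. Qed.
Lemma lb2 (A : alg) (hS : semilattice A) (a b c : A) : ale b c -> ale (meet A a b) c.
Proof. intro h. eapply (ale_trans hS); [apply (meet_lb2 hS)|exact h]. Qed.

Ltac sl hS := solve [ repeat first [ apply (meet_glb hS) | apply (ale_refl hS)
   | (apply (lb1 hS); sl hS) | (apply (lb2 hS); sl hS) | assumption ] ].

Lemma meet_comm_ale (A : alg) (hS : semilattice A) (a b : A) : ale (meet A a b) (meet A b a).
Proof. sl hS. Qed.

Lemma filter_up (A : alg) (F : A -> Prop) a b : filter F -> F a -> ale a b -> F b.
Proof. intros [_ [h _]]; eauto. Qed.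
Lemma filter_meet (A : alg) (F : A -> Prop) a b : filter F -> F a -> F b -> F (meet A a b).
Proof. intros [_ [_ h]]; eauto. Qed.

Lemma hom_mono (A B : alg) (f : A -> B) (hm : forall a b, f (meet A a b) = meet B (f a) (f b))
  a b : ale a b -> ale (f a) (f b).
Proof. unfold ale; intro h. rewrite <- hm, h. reflexivity. Qed.

Definition gen (A : alg) (F : A -> Prop) (a : A) : A -> Prop :=
  fun x => exists u, F u /\ ale (meet A u a) x.
Arguments gen {A} F a _.

Lemma gen_filter (A : alg) (hS : semilattice A) (F : A -> Prop) (a : A) : filter F -> filter (gen F a).
Proof.
  intros hF. destruct hF as [[u hu] [hup hm]]. split; [|split].
  - exists (meet A u a). exists u. split; auto. apply (ale_refl hS).
  - intros x y [v [hv h1]] h2. exists v. split; auto. eapply (ale_trans hS); eauto.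
  - intros x y [v [hv h1]] [w [hw h2]]. exists (meet A v w). split; auto.
    apply (meet_glb hS).
    + eapply (ale_trans hS); [|exact h1]. sl hS.
    + eapply (ale_trans hS); [|exact h2]. sl hS.
Qed.

Lemma gen_incl (A : alg) (hS : semilattice A) (F : A -> Prop) a x : F x -> gen F a x.
Proof. intro h. exists x. split; auto. sl hS. Qed.
Lemma gen_a (A : alg) (hS : semilattice A) (F : A -> Prop) a : filter F -> gen F a a.
Proof. intros [[u hu] _]. exists u. split; auto. sl hS. Qed.

Lemma mi_fwd (A : alg) (hS : semilattice A) (F : A -> Prop) : mi_filter F ->
  forall a b, ~ F a -> ~ F b -> exists c u, ~ F c /\ F u /\ ale (meet A u a) c /\ ale (meet A u b) c.
Proof.
  intros [hF [_ hmi]] a b ha hb. apply NNPP. intro hno. apply hmi.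
  exists (gen F a), (gen F b). split; [apply gen_filter; auto|]. split; [apply gen_filter; auto|].
  split; [intro e; apply ha; apply e; apply gen_a; auto|].
  split; [intro e; apply hb; apply e; apply gen_a; auto|].
  intro x; split.
  - intro hx; split; apply gen_incl; auto.
  - intros [[u1 [hu1 h1]] [u2 [hu2 h2]]]. apply NNPP; intro hx. apply hno.
    exists x, (meet A u1 u2). split; auto. split; [apply filter_meet; auto|]. split.
    + eapply (ale_trans hS); [|exact h1]. sl hS.
    + eapply (ale_trans hS); [|exact h2]. sl hS.
Qed.

Lemma mi_bwd (A : alg) (hS : semilattice A) (F : A -> Prop) : filter F -> (exists a, ~ F a) ->
  (forall a b, ~ F a -> ~ F b -> exists c u, ~ F c /\ F u /\ ale (meet A u a) c /\ ale (meet A u b) c) ->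
  mi_filter F.
Proof.
  intros hF hp hc. split; auto. split; auto.
  intros [G [H [hG [hH [nG [nH e]]]]]].
  assert (ea : exists a, G a /\ ~ F a).
  { apply NNPP; intro n. apply nG. intro a. split.
    - intro ga. apply NNPP; intro fa. apply n. eauto.
    - intro fa. apply e in fa. tauto. }
  assert (eb : exists a, H a /\ ~ F a).
  { apply NNPP; intro n. apply nH. intro a. split.
    - intro ga. apply NNPP; intro fa. apply n. eauto.
    - intro fa. apply e in fa. tauto. }
  destruct ea as [a [ga fa]], eb as [b [hb fb]].
  destruct (hc a b fa fb) as [c [u [fc [fu [h1 h2]]]]].
  apply fc. apply e. apply e in fu. destruct fu as [gu hu]. split.
  - eapply filter_up; [exact hG| |exact h1]. apply filter_meet; auto.
  - eapply filter_up; [exact hH| |exact h2]. apply filter_meet; auto.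
Qed.

Definition fam (B : alg) (K S : B -> Prop) :=
  { Z : B -> Prop | filter Z /\ (forall b, K b -> Z b) /\ (forall b, Z b -> ~ S b) }.
Arguments fam {B} K S.

Lemma filter_zorn (B : alg) (hS : semilattice B) (K S : B -> Prop) :
  filter K -> (forall b, K b -> ~ S b) ->
  exists Z : B -> Prop, filter Z /\ (forall b, K b -> Z b) /\ (forall b, Z b -> ~ S b) /\
    (forall Z' : B -> Prop, filter Z' -> (forall b, Z b -> Z' b) -> (forall b, Z' b -> ~ S b) ->
       forall b, Z' b -> Z b).
Proof.
  intros hK hKS.
  pose (R := fun (X Y : fam K S) => forall b, proj1_sig X b -> proj1_sig Y b).
  destruct (@zorn_prop (fam K S) R) as [t Ht].
  - intros t b h; exact h.
  - intros r s t h1 h2 b h; auto.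
  - intros [X hX] [Y hY] h1 h2. unfold R in *; simpl in *.
    assert (X = Y). { apply functional_extensionality; intro b; apply propositional_extensionality; split; auto. }
    subst Y. f_equal. apply proof_irrelevance.
  - intros Ch hCh. destruct (classic (exists t, Ch t)) as [[t0 ht0]|hne].
    + pose (U := fun b => exists t, Ch t /\ proj1_sig t b).
      assert (hU : filter U /\ (forall b, K b -> U b) /\ (forall b, U b -> ~ S b)).
      { split; [split; [|split]|split].
        - destruct (proj2_sig t0) as [[[z hz] _] _]. exists z, t0. auto.
        - intros a b [t [ht ha]] hab. exists t. split; auto.
          destruct (proj2_sig t) as [hZ _]. eapply filter_up; eauto.
        - intros a b [t [ht ha]] [s [hs hb]].
          destruct (hCh t s ht hs) as [h|h].
          + exists s. split; auto. destruct (proj2_sig s) as [hZ _]. apply filter_meet; auto.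
          + exists t. split; auto. destruct (proj2_sig t) as [hZ _]. apply filter_meet; auto.
        - intros b hb. exists t0. split; auto. destruct (proj2_sig t0) as [_ [h _]]; auto.
        - intros b [t [ht hb]]. destruct (proj2_sig t) as [_ [_ h]]; eauto. }
      exists (exist _ U hU). intros s hs b hb. simpl. exists s. auto.
    + exists (exist _ K (conj hK (conj (fun b h => h) hKS))). intros s hs. exfalso. eauto.
  - destruct t as [Z [hZ [hKZ hZS]]]. exists Z. split; auto. split; auto. split; auto.
    intros Z' hZ' hZZ' hZ'S b hb.
    assert (hK' : forall b, K b -> Z' b) by auto.
    specialize (Ht (exist _ Z' (conj hZ' (conj hK' hZ'S))) hZZ').
    inversion Ht. subst. exact hb.
Qed.

Lemma max_gen (B : alg) (hS : semilattice B) (S Z : B -> Prop) :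
  filter Z ->
  (forall Z' : B -> Prop, filter Z' -> (forall b, Z b -> Z' b) -> (forall b, Z' b -> ~ S b) ->
       forall b, Z' b -> Z b) ->
  forall y, ~ Z y -> exists s, S s /\ gen Z y s.
Proof.
  intros hZ hmax y hy. apply NNPP; intro n. apply hy. apply (hmax (gen Z y)).
  - apply gen_filter; auto.
  - intros; apply gen_incl; auto.
  - intros b hb hs. apply n. eauto.
  - apply gen_a; auto.
Qed.

Lemma ext_lemma (A B : alg) (hA : semilattice A) (hB : semilattice B) (f : A -> B)
  (hm : forall a b, f (meet A a b) = meet B (f a) (f b))
  (H : A -> Prop) (K : B -> Prop) :
  mi_filter H -> filter K -> (forall h, H h -> K (f h)) -> (forall a, K (f a) -> H a) ->
  exists Z, mi_filter Z /\ (forall b, K b -> Z b) /\ (forall a, Z (f a) <-> H a).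
Proof.
  intros hH hK h1 h2.
  pose (S := fun b => exists a, ~ H a /\ b = f a).
  destruct (@filter_zorn B hB K S hK) as [Z [hZ [hKZ [hZS hmax]]]].
  { intros b hb [a [ha e]]. subst b. auto. }
  assert (hZf : forall a, Z (f a) <-> H a).
  { intro a; split; intro h.
    - apply NNPP; intro n. eapply hZS; eauto. exists a; auto.
    - auto. }
  exists Z. split; [|split; auto].
  apply mi_bwd; auto.
  - destruct hH as [_ [[a0 ha0] _]]. exists (f a0). intro z. apply ha0. apply hZf; auto.
  - intros y1 y2 n1 n2.
    destruct (@max_gen B hB S Z hZ hmax y1 n1) as [s1 [[a1 [na1 e1]] [z1 [hz1 l1]]]].
    destruct (@max_gen B hB S Z hZ hmax y2 n2) as [s2 [[a2 [na2 e2]] [z2 [hz2 l2]]]].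
    subst s1 s2.
    destruct (@mi_fwd A hA H hH a1 a2 na1 na2) as [c [h [nc [hh [m1 m2]]]]].
    exists (f c), (meet B z1 (meet B z2 (f h))). split; [|split; [|split]].
    + intro zc. apply nc. apply hZf; auto.
    + apply (@filter_meet B Z); auto. apply (@filter_meet B Z); auto.
    + apply (ale_trans hB) with (b := meet B (f h) (f a1)).
      * apply (meet_glb hB).
        -- sl hB.
        -- eapply (ale_trans hB); [|exact l1]. sl hB.
      * rewrite <- hm. apply hom_mono; auto.
    + apply (ale_trans hB) with (b := meet B (f h) (f a2)).
      * apply (meet_glb hB).
        -- sl hB.
        -- eapply (ale_trans hB); [|exact l2]. sl hB.
      * rewrite <- hm. apply hom_mono; auto.
Qed.

Lemma fstar_surj (A B : alg) (hA : semilattice A) (hB : semilattice B) (f : A -> B)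
  (hm : forall a b, f (meet A a b) = meet B (f a) (f b)) :
  (forall a b : A, f a = f b -> a = b) -> psurjective (fstar f).
Proof.
  intros hinj [H hH].
  pose (K := fun b => exists h, H h /\ ale (f h) b).
  assert (hK : filter K).
  { destruct hH as [[[h0 hh0] [hup hmH]] _]. split; [|split].
    - exists (f h0), h0. split; auto. apply (ale_refl hB).
    - intros x y [h [hh l]] l2. exists h. split; auto. eapply (ale_trans hB); eauto.
    - intros x y [h [hh l]] [h' [hh' l']]. exists (meet A h h'). split; auto.
      rewrite hm. apply (meet_glb hB).
      + eapply (ale_trans hB); [|exact l]. sl hB.
      + eapply (ale_trans hB); [|exact l']. sl hB. }
  destruct (@ext_lemma A B hA hB f hm H K hH hK) as [Z [hZ [_ hZf]]].
  - intros h hh. exists h. split; auto. apply (ale_refl hB).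
  - intros a [h [hh l]]. unfold ale in l. rewrite <- hm in l. apply hinj in l.
    destruct hH as [hF _]. eapply filter_up; eauto.
  - exists (exist _ Z hZ). intro a. simpl. split; apply hZf.
Qed.

Lemma fstar_sv (A B : alg) (f : A -> B) : single_valued (fstar f).
Proof.
  intros x y y' h1 h2. apply mifs_le_anti; intros a ha; simpl in *.
  - apply h2, h1, ha.
  - apply h1, h2, ha.
Qed.

Lemma fstar_op (A B : alg) (f : A -> B) : order_pres (fstar f).
Proof.
  intros x z a b h1 h2 l t ht. simpl in *. apply h2. apply l. apply h1. exact ht.
Qed.

Lemma ale_bot (A : alg) (hS : semilattice A) (hb : bot_min A) (x : A) : ale x (bot A) -> x = bot A.
Proof.
  intro h. apply (ale_anti hS); [exact h|apply hb].
Qed.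

Lemma filter_bot (A : alg) (hb : bot_min A) (F : A -> Prop) : filter F -> F (bot A) -> forall a, F a.
Proof. intros hF h a. eapply filter_up; [exact hF|exact h|apply hb]. Qed.

Lemma mi_nbot (A : alg) (hb : bot_min A) (F : A -> Prop) : mi_filter F -> ~ F (bot A).
Proof. intros [hF [[a na] _]] h. apply na. eapply filter_bot; eauto. Qed.

Definition ultra (A : alg) (n : A -> A) (U : A -> Prop) :=
  filter U /\ ~ U (bot A) /\ forall a, U a \/ U (n a).
Arguments ultra {A} n U.

Lemma n_contra (A : alg) (hS : semilattice A) (n : A -> A)
  (hn : forall a c, meet A c a = bot A <-> ale c (n a)) a : meet A (n a) a = bot A.
Proof. apply hn. apply (ale_refl hS). Qed.

Lemma ultra_max (A : alg) (hS : semilattice A) (hb : bot_min A) (n : A -> A)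
  (hn : forall a c, meet A c a = bot A <-> ale c (n a)) (U V : A -> Prop) :
  ultra n U -> filter V -> ~ V (bot A) -> (forall a, U a -> V a) -> forall a, V a -> U a.
Proof.
  intros [hU [hUb hUn]] hV hVb hUV a ha. destruct (hUn a) as [h|h]; auto.
  exfalso. apply hVb. rewrite <- (n_contra hS n hn a). apply (@filter_meet A V); auto.
Qed.

Lemma ultra_mi (A : alg) (hS : semilattice A) (hb : bot_min A) (n : A -> A)
  (hn : forall a c, meet A c a = bot A <-> ale c (n a)) (U : A -> Prop) :
  ultra n U -> mi_filter U.
Proof.
  intros hu. pose proof hu as [hU [hUb hUn]]. split; auto. split; [exists (bot A); auto|].
  intros [G [H [hG [hH [nG [nH e]]]]]].
  assert (gb : G (bot A)).
  { apply NNPP; intro gb. apply nG. intro a; split.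
    - apply (ultra_max hS hb hn hu hG gb). intros b hb'. apply e in hb'. tauto.
    - intro h. apply e in h. tauto. }
  assert (hbb : H (bot A)).
  { apply NNPP; intro hb2. apply nH. intro a; split.
    - apply (ultra_max hS hb hn hu hH hb2). intros b hb'. apply e in hb'. tauto.
    - intro h. apply e in h. tauto. }
  apply hUb. apply e. auto.
Qed.

Lemma zorn_ultra (A : alg) (hS : semilattice A) (hb : bot_min A) (n : A -> A)
  (hn : forall a c, meet A c a = bot A <-> ale c (n a)) (K : A -> Prop) :
  filter K -> ~ K (bot A) -> exists U, ultra n U /\ forall a, K a -> U a.
Proof.
  intros hK hKb.
  destruct (@filter_zorn A hS K (fun b => b = bot A) hK) as [Z [hZ [hKZ [hZS hmax]]]].
  { intros b h e; subst; auto. }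
  exists Z. split; auto. split; auto. split; [intro z; eapply hZS; eauto|].
  intro a. destruct (classic (Z a)) as [h|h]; auto. right.
  destruct (@max_gen A hS _ Z hZ hmax a h) as [s [e [u [hu l]]]]. subst s.
  apply ale_bot in l; auto. apply hn in l. eapply filter_up; eauto.
Qed.

Lemma ultra_pre (A B : alg) (hB : semilattice B) (htB : top_max B) (nA : A -> A) (nB : B -> B)
  (f : A -> B) (hm : forall a b, f (meet A a b) = meet B (f a) (f b))
  (hnf : forall a, f (nA a) = nB (f a)) (h0 : f (bot A) = bot B) (h1 : f (top A) = top B)
  (U : B -> Prop) : ultra nB U -> ultra nA (fun a => U (f a)).
Proof.
  intros [hU [hUb hUn]]. split; [split; [|split]|split].
  - exists (top A). rewrite h1. pose proof hU as [[u hu] _]. eapply filter_up; [exact hU|exact hu|apply htB].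
  - intros a b ha l. eapply filter_up; eauto. apply hom_mono; auto.
  - intros a b ha hb. rewrite hm. apply (@filter_meet B U); auto.
  - rewrite h0; auto.
  - intro a. rewrite hnf. auto.
Qed.

Definition genK (A B : alg) (f : A -> B) (F : B -> Prop) (H : A -> Prop) : B -> Prop :=
  fun y => exists u h, F u /\ H h /\ ale (meet B u (f h)) y.
Arguments genK {A B} f F H _.

Lemma genK_filter (A B : alg) (hB : semilattice B) (f : A -> B)
  (hm : forall a b, f (meet A a b) = meet B (f a) (f b)) (F : B -> Prop) (H : A -> Prop) :
  filter F -> filter H -> filter (genK f F H).
Proof.
  intros hF hH. split; [|split].
  - destruct hF as [[u hu] _], hH as [[h hh] _]. exists (meet B u (f h)), u, h. split; auto. split; auto. apply (ale_refl hB).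
  - intros x y [u [h [hu [hh l]]]] l2. exists u, h. split; auto. split; auto. eapply (ale_trans hB); eauto.
  - intros x y [u [h [hu [hh l]]]] [u' [h' [hu' [hh' l']]]].
    exists (meet B u u'), (meet A h h'). split; [apply (@filter_meet B F); auto|].
    split; [apply (@filter_meet A H); auto|]. rewrite hm. apply (meet_glb hB).
    + eapply (ale_trans hB); [|exact l]. sl hB.
    + eapply (ale_trans hB); [|exact l']. sl hB.
Qed.

Lemma genK_F (A B : alg) (hB : semilattice B) (f : A -> B) (F : B -> Prop) (H : A -> Prop) :
  filter H -> forall u, F u -> genK f F H u.
Proof. intros [[h hh] _] u hu. exists u, h. split; auto. split; auto. sl hB. Qed.

Lemma genK_H (A B : alg) (hB : semilattice B) (f : A -> B) (F : B -> Prop) (H : A -> Prop) :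
  filter F -> forall h, H h -> genK f F H (f h).
Proof. intros [[u hu] _] h hh. exists u, h. split; auto. split; auto. sl hB. Qed.

Lemma fstar_neg (A B : alg) (hA : semilattice A) (hB : semilattice B)
  (hbA : bot_min A) (hbB : bot_min B) (htB : top_max B) (nA : A -> A) (nB : B -> B)
  (hnA : forall a c, meet A c a = bot A <-> ale c (nA a))
  (hnB : forall a c, meet B c a = bot B <-> ale c (nB a))
  (f : A -> B) (hm : forall a b, f (meet A a b) = meet B (f a) (f b))
  (hnf : forall a, f (nA a) = nB (f a)) (h0 : f (bot A) = bot B) (h1 : f (top A) = top B) :
  neg_cond (fstar f).
Proof.
  split.
  - intros [F hF]. pose proof hF as [hF' _].
    destruct (@zorn_ultra B hB hbB nB hnB F hF') as [U [hU hFU]].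
    { apply (mi_nbot hbB hF). }
    exists (exist _ U (ultra_mi hB hbB hnB hU)). split; [exact hFU|].
    intros [V hV] hUV. simpl in *. unfold mifs_le in hUV; simpl in hUV.
    assert (hVU : forall a, V a -> U a).
    { apply (ultra_max hB hbB hnB hU); auto. apply hV. apply (mi_nbot hbB hV). }
    assert (uV : ultra nB V).
    { destruct hU as [_ [hUb hUn]]. split; [apply hV|]. split; [apply (mi_nbot hbB hV)|].
      intro a. destruct (hUn a); auto. }
    exists (exist _ (fun a => V (f a)) (ultra_mi hA hbA hnA (@ultra_pre A B hB htB nA nB f hm hnf h0 h1 V uV))).
    intro a; simpl; tauto.
  - intros [F hF] [G hG] [H hH] e l. unfold fstar in e; simpl in e. unfold mifs_le in l; simpl in l.
    assert (hK : filter (genK f F H)) by (apply genK_filter; auto; [apply hF|apply hH]).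
    destruct (@zorn_ultra B hB hbB nB hnB _ hK) as [U [hU hKU]].
    { intros [u [h [hu [hh lb]]]]. apply ale_bot in lb; auto. apply hnB in lb. rewrite <- hnf in lb.
      assert (F (f (nA h))) by (eapply filter_up; eauto; apply hF).
      assert (H (nA h)) by (apply l, e; auto).
      apply (mi_nbot hbA hH). rewrite <- (n_contra hA nA hnA h). apply (@filter_meet A H); auto. apply hH. }
    exists (exist _ U (ultra_mi hB hbB hnB hU)).
    exists (exist _ (fun a => U (f a)) (ultra_mi hA hbA hnA (@ultra_pre A B hB htB nA nB f hm hnf h0 h1 U hU))).
    split; [|split].
    + intros u hu. simpl. apply hKU. apply genK_F; auto. apply hH.
    + intro a; simpl; tauto.
    + intros h hh. simpl. apply hKU. apply genK_H; auto. apply hF.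
Qed.

Lemma fstar_pos (A B : alg) (hA : semilattice A) (hB : semilattice B)
  (hiA : forall a b c : A, ale (meet A c a) b <-> ale c (imp A a b))
  (hiB : forall a b c : B, ale (meet B c a) b <-> ale c (imp B a b))
  (f : A -> B) (hm : forall a b, f (meet A a b) = meet B (f a) (f b))
  (hif : forall a b, f (imp A a b) = imp B (f a) (f b)) :
  pos_cond (fstar f).
Proof.
  intros [F hF] [G hG] [H hH] e l. unfold fstar in e; simpl in e. unfold mifs_le in l; simpl in l.
  assert (hK : filter (genK f F H)) by (apply genK_filter; auto; [apply hF|apply hH]).
  destruct (@ext_lemma A B hA hB f hm H _ hH hK) as [Z [hZ [hKZ hZf]]].
  - intros h hh. apply genK_H; auto. apply hF.
  - intros t [u [h [hu [hh lb]]]]. apply hiB in lb. rewrite <- hif in lb.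
    assert (F (f (imp A h t))) by (eapply filter_up; eauto; apply hF).
    assert (H (imp A h t)) by (apply l, e; auto).
    apply (@filter_up A H (meet A (imp A h t) h) t); [apply hH| |].
    + apply (@filter_meet A H); [apply hH| |]; eauto.
    + apply hiA. apply (ale_refl hA).
  - exists (exist _ Z hZ). split.
    + intros u hu. simpl. apply hKZ. apply genK_F; auto. apply hH.
    + intro a; simpl. split; apply hZf.
Qed.

Lemma join_ub1 (A : alg) (hL : lattice A) (a b : A) : ale a (join A a b).
Proof. destruct hL as [_ [_ [_ [_ [h _]]]]]. apply h. Qed.

Lemma join_ub2 (A : alg) (hL : lattice A) (a b : A) : ale b (join A a b).
Proof. destruct hL as [_ [_ [hC [_ [h _]]]]]. unfold ale. rewrite hC. apply h. Qed.

Lemma join_lub (A : alg) (hL : lattice A) (a b d : A) : ale a d -> ale b d -> ale (join A a b) d.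
Proof.
  destruct hL as [[mA [mC mI]] [jA [jC [jI [ab1 ab2]]]]].
  assert (tj : forall x y : A, ale x y -> join A x y = y).
  { intros x y h. unfold ale in h. rewrite <- h at 1. rewrite jC. rewrite mC. apply ab2. }
  intros h1 h2. apply tj in h1. apply tj in h2.
  unfold ale. assert (e : join A (join A a b) d = d) by (rewrite <- jA, h2, h1; reflexivity).
  rewrite <- e at 1. apply ab1.
Qed.

Lemma mi_prime (A : alg) (hS : semilattice A)
  (hlub : forall a b d : A, ale a d -> ale b d -> ale (join A a b) d)
  (hd : forall u a b : A, ale (meet A u (join A a b)) (join A (meet A u a) (meet A u b)))
  (F : A -> Prop) : mi_filter F -> forall a b, F (join A a b) -> F a \/ F b.
Proof.
  intros hF a b hab. apply NNPP; intro n.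
  destruct (@mi_fwd A hS F hF a b) as [c [u [nc [hu [l1 l2]]]]]; [tauto|tauto|].
  apply nc. destruct hF as [hF _].
  apply (@filter_up A F (meet A u (join A a b)) c hF).
  - apply (@filter_meet A F); auto.
  - eapply (ale_trans hS); [apply hd|]. apply hlub; auto.
Qed.

Lemma prime_mi (A : alg) (hS : semilattice A)
  (hub1 : forall a b : A, ale a (join A a b)) (hub2 : forall a b : A, ale b (join A a b))
  (F : A -> Prop) : filter F -> (exists a, ~ F a) ->
  (forall a b, F (join A a b) -> F a \/ F b) -> mi_filter F.
Proof.
  intros hF hp hpr. split; auto. split; auto.
  intros [G [H [hG [hH [nG [nH e]]]]]].
  assert (ea : exists a, G a /\ ~ F a).
  { apply NNPP; intro n. apply nG. intro a. split.
    - intro ga. apply NNPP; intro fa. apply n. eauto.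
    - intro fa. apply e in fa. tauto. }
  assert (eb : exists a, H a /\ ~ F a).
  { apply NNPP; intro n. apply nH. intro a. split.
    - intro ga. apply NNPP; intro fa. apply n. eauto.
    - intro fa. apply e in fa. tauto. }
  destruct ea as [a [ga fa]], eb as [b [hb fb]].
  assert (F (join A a b)).
  { apply e. split; eapply filter_up; eauto. }
  destruct (hpr a b); auto.
Qed.

Lemma pre_mi (A B : alg) (hA : semilattice A)
  (hub1 : forall a b : A, ale a (join A a b)) (hub2 : forall a b : A, ale b (join A a b))
  (hB : semilattice B) (htB : top_max B)
  (hlub : forall a b d : B, ale a d -> ale b d -> ale (join B a b) d)
  (hd : forall u a b : B, ale (meet B u (join B a b)) (join B (meet B u a) (meet B u b)))
  (f : A -> B) (hm : forall a b, f (meet A a b) = meet B (f a) (f b))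
  (hj : forall a b, f (join A a b) = join B (f a) (f b)) (h1 : f (top A) = top B)
  (F : B -> Prop) : mi_filter F -> (exists a, ~ F (f a)) -> mi_filter (fun a => F (f a)).
Proof.
  intros hF hp. apply prime_mi; auto.
  - destruct hF as [hF' _]. split; [|split].
    + exists (top A). rewrite h1. pose proof hF' as [[u hu] _]. eapply filter_up; [exact hF'|exact hu|apply htB].
    + intros a b ha l. eapply filter_up; eauto. apply hom_mono; auto.
    + intros a b ha hb. rewrite hm. apply (@filter_meet B F); auto.
  - intros a b h. rewrite hj in h. apply (mi_prime hB hlub hd hF); auto.
Qed.

Lemma dist_imp (A : alg) (hS : semilattice A)
  (hub1 : forall a b : A, ale a (join A a b)) (hub2 : forall a b : A, ale b (join A a b))
  (hlub : forall a b d : A, ale a d -> ale b d -> ale (join A a b) d)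
  (hi : forall a b c : A, ale (meet A c a) b <-> ale c (imp A a b)) :
  forall u a b : A, ale (meet A u (join A a b)) (join A (meet A u a) (meet A u b)).
Proof.
  intros u a b.
  eapply (ale_trans hS); [apply (meet_comm_ale hS)|]. apply hi. apply hlub; apply hi.
  - eapply (ale_trans hS); [apply (meet_comm_ale hS)|]. apply hub1.
  - eapply (ale_trans hS); [apply (meet_comm_ale hS)|]. apply hub2.
Qed.

Lemma dist_eq (A : alg) (hS : semilattice A) (hD : distributive A) :
  forall u a b : A, ale (meet A u (join A a b)) (join A (meet A u a) (meet A u b)).
Proof. intros u a b. rewrite hD. apply (ale_refl hS). Qed.

Lemma fstar_total (A B : alg) (hA : semilattice A)
  (hub1 : forall a b : A, ale a (join A a b)) (hub2 : forall a b : A, ale b (join A a b))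
  (hB : semilattice B) (htB : top_max B) (hbB : bot_min B)
  (hlub : forall a b d : B, ale a d -> ale b d -> ale (join B a b) d)
  (hd : forall u a b : B, ale (meet B u (join B a b)) (join B (meet B u a) (meet B u b)))
  (f : A -> B) (hm : forall a b, f (meet A a b) = meet B (f a) (f b))
  (hj : forall a b, f (join A a b) = join B (f a) (f b)) (h1 : f (top A) = top B)
  (h0 : f (bot A) = bot B) : total (fstar f).
Proof.
  intros [F hF].
  assert (hp : exists a, ~ F (f a)).
  { exists (bot A). rewrite h0. apply (mi_nbot hbB hF). }
  exists (exist _ _ (@pre_mi A B hA hub1 hub2 hB htB hlub hd f hm hj h1 F hF hp)).
  intro a; simpl; tauto.
Qed.

Lemma fstar_atotal (A B : alg) (hA : semilattice A)
  (hub1 : forall a b : A, ale a (join A a b)) (hub2 : forall a b : A, ale b (join A a b))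
  (hB : semilattice B) (htB : top_max B)
  (hlub : forall a b d : B, ale a d -> ale b d -> ale (join B a b) d)
  (hd : forall u a b : B, ale (meet B u (join B a b)) (join B (meet B u a) (meet B u b)))
  (f : A -> B) (hm : forall a b, f (meet A a b) = meet B (f a) (f b))
  (hj : forall a b, f (join A a b) = join B (f a) (f b)) (h1 : f (top A) = top B) :
  almost_total (fstar f).
Proof.
  intros x z l [g e]. destruct x as [F hF], z as [F' hF'], g as [G hG]. unfold mifs_le, fstar in *; simpl in *.
  assert (hp : exists a, ~ F (f a)).
  { destruct hG as [_ [[a na] _]]. exists a. intro h. apply na. apply e. apply l. exact h. }
  exists (exist _ _ (@pre_mi A B hA hub1 hub2 hB htB hlub hd f hm hj h1 F hF hp)).
  intro a; simpl; tauto.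
Qed.

Lemma up_ext (X : poset) (U V : ups X) : (forall x, proj1_sig U x <-> proj1_sig V x) -> U = V.
Proof.
  destruct U as [U hU], V as [V hV]; simpl; intro h.
  assert (U = V). { apply functional_extensionality; intro x; apply propositional_extensionality; auto. }
  subst V. f_equal. apply proof_irrelevance.
Qed.

Lemma um_meet (X Y : poset) (p : X -> Y -> Prop) (U V : ups Y) :
  Up_map p (up_meet U V) = up_meet (Up_map p U) (Up_map p V).
Proof.
  apply up_ext; intro x; simpl. split.
  - intro h. split; intros [x' [l [y [pxy ny]]]]; apply h; exists x'; split; auto; exists y; tauto.
  - intros [h1 h2] [x' [l [y [pxy ny]]]].
    apply not_and_or in ny. destruct ny as [ny|ny]; [apply h1|apply h2]; exists x'; split; auto; exists y; auto.
Qed.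

Lemma um_top (X Y : poset) (p : X -> Y -> Prop) : Up_map p (up_top Y) = up_top X.
Proof.
  apply up_ext; intro x; simpl. split; auto. intros _ [x' [_ [y [_ n]]]]. auto.
Qed.

Lemma um_bot (X Y : poset) (p : X -> Y -> Prop) (h : forall x, exists x', ple x x' /\ dom p x') :
  Up_map p (up_bot Y) = up_bot X.
Proof.
  apply up_ext; intro x; simpl. split; [|tauto]. intro n. apply n.
  destruct (h x) as [x' [l [y py]]]. exists x'. split; auto. exists y. auto.
Qed.

Lemma um_join (X Y : poset) (p : X -> Y -> Prop) (op : order_pres p) (at_ : almost_total p)
  (U V : ups Y) : Up_map p (up_join U V) = up_join (Up_map p U) (Up_map p V).
Proof.
  apply up_ext; intro x; simpl. split.
  - intro h. apply NNPP; intro n. apply not_or_and in n. destruct n as [n1 n2].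
    apply NNPP in n1. apply NNPP in n2.
    destruct n1 as [x1 [l1 [y1 [p1 u1]]]], n2 as [x2 [l2 [y2 [p2 u2]]]].
    destruct (at_ x x1 l1 (ex_intro _ y1 p1)) as [y py].
    apply h. exists x. split; [apply ple_refl|]. exists y. split; auto.
    intros [hu|hv].
    + apply u1. destruct U as [U hU]; simpl in *. eapply hU; [|exact hu]. eapply op; eauto.
    + apply u2. destruct V as [V hV]; simpl in *. eapply hV; [|exact hv]. eapply op; eauto.
  - intros [h|h] [x' [l [y [pxy ny]]]]; apply h; exists x'; split; auto; exists y; tauto.
Qed.

Lemma um_neg (X Y : poset) (p : X -> Y -> Prop) (op : order_pres p) (nc : neg_cond p)
  (U : ups Y) : Up_map p (up_neg U) = up_neg (Up_map p U).
Proof.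
  destruct nc as [nc1 nc2]. destruct U as [U hU].
  apply up_ext; intro x; simpl. split.
  - intros h [x'' [l [h1 _]]].
    destruct (nc1 x'') as [w [lw hw]]. destruct (hw w (ple_refl _ w)) as [b pb].
    apply h. exists w. split; [eapply ple_trans; eauto|]. exists b. split; auto.
    intro nn. apply nn. exists b. split; [apply ple_refl|]. split; auto.
    apply NNPP; intro nu. apply h1. exists w; split; auto. exists b; auto.
  - intros h [x' [l [y [pxy nn]]]]. apply NNPP in nn. destruct nn as [y' [ly [uy _]]].
    destruct (nc2 x' y y' pxy ly) as [z [b [lz [pzb lb]]]].
    apply h. exists z. split; [eapply ple_trans; eauto|]. split; auto.
    intros [x3 [l3 [c [pc nc]]]]. apply nc. apply (hU b); [eapply op; eauto|]. eapply hU; eauto.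
Qed.

Lemma um_imp (X Y : poset) (p : X -> Y -> Prop) (op : order_pres p) (pc : pos_cond p)
  (U V : ups Y) : Up_map p (up_imp U V) = up_imp (Up_map p U) (Up_map p V).
Proof.
  destruct U as [U hU], V as [V hV].
  apply up_ext; intro x; simpl. split.
  - intros h [x'' [l [h1 h2]]]. apply NNPP in h2. destruct h2 as [x' [l' [y [pxy ny]]]].
    apply h. exists x'. split; [eapply ple_trans; eauto|]. exists y. split; auto.
    intro nn. apply nn. exists y. split; [apply ple_refl|]. split; auto.
    apply NNPP; intro nu. apply h1. exists x'; split; auto. exists y; auto.
  - intros h [x' [l [y [pxy nn]]]]. apply NNPP in nn. destruct nn as [y' [ly [uy ny]]].
    destruct (pc x' y y' pxy ly) as [z [lz pz]].
    apply h. exists z. split; [eapply ple_trans; eauto|]. split.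
    + intros [x3 [l3 [c [pc3 nc]]]]. apply nc. apply (hU y'); [eapply op; eauto|]. exact uy.
    + intro hz. apply hz. exists z. split; [apply ple_refl|]. exists y'. auto.
Qed.

Lemma um_inj (X Y : poset) (p : X -> Y -> Prop) (op : order_pres p) (su : psurjective p)
  (U V : ups Y) : Up_map p U = Up_map p V -> U = V.
Proof.
  intro e.
  assert (key : forall U V : ups Y, Up_map p U = Up_map p V -> forall y, proj1_sig U y -> proj1_sig V y).
  { clear U V e. intros U V e y uy. apply NNPP; intro ny.
    destruct (su y) as [x pxy].
    pose proof (f_equal (fun W : ups X => proj1_sig W x) e) as E. simpl in E.
    assert (h : ~ (exists x' : X, ple x x' /\ (exists y0 : Y, p x' y0 /\ ~ proj1_sig U y0))).
    { intros [x' [l [y' [p' n']]]]. apply n'. apply (proj2_sig U y); [eapply op; eauto|]. exact uy. }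
    rewrite E in h. apply h. exists x. split; [apply ple_refl|]. exists y. auto. }
  apply up_ext; intro y; split; apply key; auto.
Qed.

Lemma neg_from_imp (A : alg) (hS : semilattice A) (hb : bot_min A)
  (hi : forall a b c : A, ale (meet A c a) b <-> ale c (imp A a b)) :
  forall a c : A, meet A c a = bot A <-> ale c (imp A a (bot A)).
Proof.
  intros a c; split.
  - intro e. apply hi. rewrite e. apply (ale_refl hS).
  - intro l. apply hi in l. apply (ale_bot hS hb l).
Qed.

Lemma nc_bot (X Y : poset) (p : X -> Y -> Prop) : neg_cond p -> forall x, exists x', ple x x' /\ dom p x'.
Proof. intros [h _] x. destruct (h x) as [w [l hw]]. exists w. split; auto. apply hw, ple_refl. Qed.

Lemma tot_bot (X Y : poset) (p : X -> Y -> Prop) : total p -> forall x, exists x', ple x x' /\ dom p x'.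
Proof. intros h x. exists x. split; auto. apply ple_refl. Qed.

Lemma tot_at (X Y : poset) (p : X -> Y -> Prop) : total p -> almost_total p.
Proof. intros h x z _ _. apply h. Qed.

Ltac up_solve :=
  repeat split; intros;
  first [ apply um_meet | apply um_top | apply um_bot; solve [eauto using nc_bot, tot_bot]
        | apply um_join; solve [eauto using tot_at] | apply um_neg; solve [eauto]
        | apply um_imp; solve [eauto] ].

Theorem proposition3p5 (k : kind) :
  (forall (A B : alg) (f : A -> B),
      in_K k A -> in_K k B -> hom k A B f ->
      in_Kd k (fstar f) /\
      ((forall a b : A, f a = f b -> a = b) -> psurjective (fstar f))) /\
  (forall (X Y : poset) (p : X -> Y -> Prop),
      in_Kd k p ->
      hom k (Up Y) (Up X) (Up_map p) /\
      (psurjective p -> forall U V : Up Y, Up_map p U = Up_map p V -> U = V)).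
Proof.
  split.
  - intros A B f hA hB hf.
    assert (sv := @fstar_sv A B f). assert (op := @fstar_op A B f).
    destruct k; simpl in hA, hB, hf.
    + destruct hA as [hSA [hbA [htA hnA]]], hB as [hSB [hbB [htB hnB]]], hf as [hm [hn [h0 h1]]].
      split; [split; [exact sv|split; [exact op|]]|intro hinj; exact (@fstar_surj A B hSA hSB f hm hinj)].
      exact (@fstar_neg A B hSA hSB hbA hbB htB (neg A) (neg B) hnA hnB f hm hn h0 h1).
    + destruct hA as [hSA [htA hiA]], hB as [hSB [htB hiB]], hf as [hm [hi h1]].
      split; [split; [exact sv|split; [exact op|]]|intro hinj; exact (@fstar_surj A B hSA hSB f hm hinj)].
      exact (@fstar_pos A B hSA hSB hiA hiB f hm hi).
    + destruct hA as [[hSA [htA hiA]] hbA], hB as [[hSB [htB hiB]] hbB], hf as [hm [hi [h0 h1]]].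
      split; [split; [exact sv|split; [exact op|]]|intro hinj; exact (@fstar_surj A B hSA hSB f hm hinj)].
      split; [|exact (@fstar_pos A B hSA hSB hiA hiB f hm hi)].
      apply (@fstar_neg A B hSA hSB hbA hbB htB (fun a => imp A a (bot A)) (fun b => imp B b (bot B))
               (neg_from_imp hSA hbA hiA) (neg_from_imp hSB hbB hiB) f hm); auto.
      intro a. rewrite hi, h0. reflexivity.
    + destruct hA as [hLA [hDA [hSA [hbA [htA hnA]]]]], hB as [hLB [hDB [hSB [hbB [htB hnB]]]]],
        hf as [hm [hj [hn [h0 h1]]]].
      split; [split; [exact sv|split; [exact op|]]|intro hinj; exact (@fstar_surj A B hSA hSB f hm hinj)].
      split.
      * exact (@fstar_total A B hSA (join_ub1 hLA) (join_ub2 hLA) hSB htB hbB (join_lub hLB)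
                 (dist_eq hSB hDB) f hm hj h1 h0).
      * exact (@fstar_neg A B hSA hSB hbA hbB htB (neg A) (neg B) hnA hnB f hm hn h0 h1).
    + destruct hA as [hLA [hSA [htA hiA]]], hB as [hLB [hSB [htB hiB]]], hf as [hm [hj [hi h1]]].
      split; [split; [exact sv|split; [exact op|]]|intro hinj; exact (@fstar_surj A B hSA hSB f hm hinj)].
      split.
      * exact (@fstar_atotal A B hSA (join_ub1 hLA) (join_ub2 hLA) hSB htB (join_lub hLB)
                 (dist_imp hSB (join_ub1 hLB) (join_ub2 hLB) (join_lub hLB) hiB) f hm hj h1).
      * exact (@fstar_pos A B hSA hSB hiA hiB f hm hi).
    + destruct hA as [hLA [[hSA [htA hiA]] hbA]], hB as [hLB [[hSB [htB hiB]] hbB]],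
        hf as [hm [hj [hi [h0 h1]]]].
      split; [split; [exact sv|split; [exact op|]]|intro hinj; exact (@fstar_surj A B hSA hSB f hm hinj)].
      split; [|split].
      * exact (@fstar_total A B hSA (join_ub1 hLA) (join_ub2 hLA) hSB htB hbB (join_lub hLB)
                 (dist_imp hSB (join_ub1 hLB) (join_ub2 hLB) (join_lub hLB) hiB) f hm hj h1 h0).
      * apply (@fstar_neg A B hSA hSB hbA hbB htB (fun a => imp A a (bot A)) (fun b => imp B b (bot B))
               (neg_from_imp hSA hbA hiA) (neg_from_imp hSB hbB hiB) f hm); auto.
        intro a. rewrite hi, h0. reflexivity.
      * exact (@fstar_pos A B hSA hSB hiA hiB f hm hi).
  - intros X Y p [sv [op hk]]. split; [|intro su; exact (um_inj op su)].
    destruct k; simpl in hk.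
    + up_solve.
    + up_solve.
    + destruct hk as [nc pc]. up_solve.
    + destruct hk as [tt nc]. up_solve.
    + destruct hk as [at_ pc]. up_solve.
    + destruct hk as [tt [nc pc]]. up_solve.
Qed.
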